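(* Let $\mathbf n=(n_1,\dots,n_r)$ and $\mathbf d=(d_1,\dots,d_r)$ be $r$-tuples of positive integers with $n_1\leq\dots\leq n_r$, and let $SV^{\mathbf n}_{\mathbf d}\subseteq\mathbb P^{N(\mathbf n,\mathbf d)}$, $N(\mathbf n,\mathbf d)=\prod_{i=1}^r\binom{n_i+d_i}{n_i}-1$, be the Segre–Veronese variety, i.e. the image of $\mathbb P^{n_1}\times\dots\times\mathbb P^{n_r}$ under the embedding given by $\mathcal O(d_1,\dots,d_r)$. If $h$ is a positive integer with $h\leq\lceil d_i/2\rceil$ for all $i=1,\dots,r$, then the Terracini locus $T_h(SV^{\mathbf n}_{\mathbf d})$ is empty.
   Context: For a smooth irreducible non-degenerate $X\subseteq\mathbb P^N$ of dimension $n$, the $h$-th Terracini locus $T_h(X)$ is the closure in $X^h/S_h$ of the set of unordered $h$-tuples of pairwise distinct points $x_1,\dots,x_h\in X$ with $\dim\langle T_{x_1}X,\dots,T_{x_h}X\rangle<\min\{hn+h-1,N\}$. *)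

(* Defs.v *)
(* Ground field: the complex numbers, realised as R[i]
   (mathcomp-real-closed [complex]) for an arbitrary realType R. *)
From HB Require Import structures.
From mathcomp Require Import all_boot all_order all_algebra.
From mathcomp Require Import reals.
From mathcomp.real_closed Require Export complex.
Set Implicit Arguments. Unset Strict Implicit. Unset Printing Implicit Defensive.
Import GRing.Theory.
Local Open Scope ring_scope.

(* Monomials of degree k in the m+1 homogeneous coordinates of P^m:
   exponent vectors e : (m+1).-tuple 'I_(k+1) with sum k.               *)
Definition Mon (m k : nat) :=
  {t : (m.+1).-tuple 'I_k.+1 | \sum_(j < m.+1) (val (tnth t j)) == k}%N.

(* Coordinates of P^{N(n,d)}: multihomogeneous monomials of multidegree d
   in r groups of n_1+1, ..., n_r+1 variables.                           *)
Definition SVidx (r : nat) (n d : 'I_r -> nat) : finType :=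
  {dffun forall i : 'I_r, Mon (n i) (d i)}.

Section SV.
Variables (F : fieldType) (r : nat) (n d : 'I_r -> nat).

Definition SVpt := forall i : 'I_r, 'I_(n i).+1 -> F.

Definition expo (a : SVidx n d) (i : 'I_r) (j : 'I_(n i).+1) : nat :=
  val (tnth (val (a i)) j).
Arguments expo a i j : clear implicits.

Definition sv (v : SVpt) : {ffun SVidx n d -> F^o} :=
  [ffun a => \prod_(i < r) \prod_(j < (n i).+1) v i j ^+ expo a i j].

(* Partial derivative of the Segre–Veronese map w.r.t. the variable
   x_{i0,j0}, evaluated at v: coordinatewise, derivative at t = 0 of
   t |-> phi_a(v + t e_{i0 j0}). *)
Definition dsv (v : SVpt) (i0 : 'I_r) (j0 : nat) : {ffun SVidx n d -> F^o} :=
  [ffun a => ((\prod_(i < r) \prod_(j < (n i).+1)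
      ((v i j)%:P + (if (i == i0) && (val j == j0) then 'X else 0)) ^+ expo a i j)
        ^`()).[0]].

(* Affine cone over the embedded tangent space T_x X at x = [sv v]:
   the span of sv v and all partial derivatives of sv at v. *)
Definition tangent_cone (v : SVpt) : {vspace {ffun SVidx n d -> F^o}} :=
  <<sv v :: [seq dsv v i (val j) | i <- enum 'I_r, j <- enum 'I_(n i).+1]>>%VS.

(* v represents a point of P^{n_1} x ... x P^{n_r}: each block is nonzero. *)
Definition nonzero_pt (v : SVpt) : Prop := forall i : 'I_r, exists j, v i j != 0.

(* Two points of SV (given by affine representatives) coincide in P^N. *)
Definition same_proj_pt (v w : SVpt) : Prop := exists c : F, sv v = c *: sv w.

End SV.

(* Main.v *)
Require Import Defs.
From HB Require Import structures.
From mathcomp Require Import all_boot all_order all_algebra.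
From mathcomp Require Import reals.
From mathcomp.real_closed Require Import complex.
From mathcomp Require Import ring zify.
Import GRing.Theory.
Local Open Scope ring_scope.

Set Implicit Arguments. Unset Strict Implicit. Unset Printing Implicit Defensive.

Section Rep.
Variables (F : fieldType) (r : nat) (n : 'I_r -> nat).

Definition Exps := forall i : 'I_r, 'I_(n i).+1 -> nat.
Definition PPt := forall i : 'I_r, 'I_(n i).+1 -> {poly F}.
Definition mono (x : Exps) (V : PPt) : {poly F} :=
  \prod_(i < r) \prod_(j < (n i).+1) V i j ^+ x i j.

Definition Rep (e : 'I_r -> nat) (f : PPt -> {poly F}) : Prop :=
  exists (J : finType) (c : J -> F) (x : J -> Exps),
    (forall j i, \sum_(k < (n i).+1) x j i k = e i)%N /\
    forall V, f V = \sum_(j : J) c j *: mono (x j) V.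

Lemma Rep_ext e e' f f' : (forall i, e i = e' i) -> (forall V, f V = f' V) ->
  Rep e f -> Rep e' f'.
Proof.
move=> He Hf [J [c [x [Hx Hv]]]]; exists J, c, x; split.
  by move=> j i; rewrite Hx He.
by move=> V; rewrite -Hf Hv.
Qed.

Lemma Rep_one : Rep (fun _ => 0%N) (fun _ => 1).
Proof.
exists unit, (fun _ => 1), (fun _ _ _ => 0%N); split.
  by move=> _ i; rewrite big1.
move=> V; rewrite (big_pred1 tt); last by case.
by rewrite scale1r /mono big1 // => i _; rewrite big1.
Qed.

Lemma mono_add x y V :
  mono (fun i k => x i k + y i k)%N V = mono x V * mono y V.
Proof.
rewrite /mono -big_split /=; apply: eq_bigr => i _.
rewrite -big_split /=; apply: eq_bigr => k _; exact: exprD.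
Qed.

Lemma Rep_mul e1 e2 f1 f2 : Rep e1 f1 -> Rep e2 f2 ->
  Rep (fun i => e1 i + e2 i)%N (fun V => f1 V * f2 V).
Proof.
move=> [J1 [c1 [x1 [H1 E1]]]] [J2 [c2 [x2 [H2 E2]]]].
exists (J1 * J2)%type, (fun p => c1 p.1 * c2 p.2),
  (fun p i k => x1 p.1 i k + x2 p.2 i k)%N; split.
  by move=> [j1 j2] i; rewrite big_split /= H1 H2.
move=> V; rewrite E1 E2 mulr_suml.
rewrite -(pair_bigA _ (fun j1 j2 => (c1 j1 * c2 j2) *: mono (fun i k => x1 j1 i k + x2 j2 i k)%N V)) /=.
apply: eq_bigr => j1 _.
rewrite mulr_sumr; apply: eq_bigr => j2 _.
by rewrite mono_add -scalerAl -scalerAr scalerA.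
Qed.

Definition lin (i : 'I_r) (w : 'I_(n i).+1 -> F) (V : PPt) : {poly F} :=
  \sum_(k < (n i).+1) w k *: V i k.
Arguments lin i w V : clear implicits.

Lemma Rep_lin i w : Rep (fun i' => (i' == i) : nat) (lin i w).
Proof.
exists (ordinal (n i).+1), w,
  (fun k i' k' => ((i' == i) && (val k' == val k)) : nat); split.
  move=> k i'; case: (eqVneq i' i) => [->|ne]; last by rewrite big1.
  rewrite (bigD1 k) //= eqxx big1 // => k' nk.
  by move: nk; rewrite -(inj_eq val_inj) => /negbTE ->.
move=> V; apply: eq_bigr => k _; congr (_ *: _).
rewrite /mono (bigD1 i) //= [X in _ * X]big1 ?mulr1; last first.
  move=> i' ni; rewrite big1 // => k' _; by rewrite (negbTE ni).
rewrite (bigD1 k) //= !eqxx /= expr1 big1 ?mulr1 // => k' nk.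
by move: nk; rewrite -(inj_eq val_inj) => /negbTE ->.
Qed.

End Rep.
Arguments Rep_one {F r n}.
Arguments lin {F r n} i w V.

Set Implicit Arguments. Unset Strict Implicit. Unset Printing Implicit Defensive.

Lemma mon_exists m k (y : 'I_m.+1 -> nat) : (\sum_j y j)%N = k ->
  exists a : Mon m k, forall j, val (tnth (val a) j) = y j.
Proof.
move=> Hs.
have Hy j : (y j < k.+1)%N.
  by rewrite ltnS -Hs (bigD1 j) //= leq_addr.
pose t := [tuple (inord (y j) : 'I_k.+1) | j < m.+1].
have Ht j : val (tnth t j) = y j by rewrite tnth_mktuple /= inordK.
have H : (\sum_(j < m.+1) val (tnth t j) == k)%N.
  by apply/eqP; rewrite -[RHS]Hs; apply: eq_bigr => j _; rewrite Ht.
by exists (exist _ t H) => j /=; rewrite Ht.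
Qed.

Section Coef.
Variables (F : fieldType) (r : nat) (n d : 'I_r -> nat).

Definition expoE (a : SVidx n d) : Exps n := fun i j => expo a j.

Lemma expo_inj (a b : SVidx n d) : (forall i j, expo a (i:=i) j = expo b j) -> a = b.
Proof.
move=> H; apply/ffunP => i; apply: val_inj; apply: eq_from_tnth => j.
by apply: val_inj; exact: H.
Qed.

Lemma Rep_coef (f : PPt F n -> {poly F}) : Rep d f ->
  exists c : SVidx n d -> F, forall V, f V = \sum_a c a *: mono (expoE a) V.
Proof.
move=> [J [c [x [Hx Hv]]]].
have Hb j : exists b : SVidx n d, forall i k, expo b (i:=i) k = x j i k.
  have /fin_all_exists [u Hu] : forall i, exists a : Mon (n i) (d i),
      forall k, val (tnth (val a) k) = x j i k.
    by move=> i; apply: mon_exists; exact: Hx.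
  exists (finfun u) => i k; rewrite /expo ffunE; exact: Hu.
pose m (a : SVidx n d) j := [forall i, [forall k, expo a (i:=i) k == x j i k]].
exists (fun a => \sum_j (if m a j then c j else 0)) => V.
rewrite Hv.
under [RHS]eq_bigr do rewrite scaler_suml.
rewrite [RHS]exchange_big /=; apply: eq_bigr => j _.
have [b Hb'] := Hb j.
rewrite (bigD1 b) /=; last by [].
have -> : m b j by apply/forallP => i; apply/forallP => k; rewrite Hb'.
rewrite big1 ?addr0.
  congr (_ *: _); rewrite /mono; apply: eq_bigr => i _; apply: eq_bigr => k _.
  by rewrite /expoE Hb'.
move=> a nab; case E: (m a j); last by rewrite scale0r.
exfalso; move/negP: nab; apply; apply/eqP; apply: expo_inj => i k.
by rewrite Hb'; move/forallP: E => /(_ i) /forallP /(_ k) /eqP.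
Qed.

End Coef.

Set Implicit Arguments. Unset Strict Implicit. Unset Printing Implicit Defensive.

Lemma ffunZE' (F : fieldType) (I : finType) (k : F) (f : {ffun I -> F^o}) x :
  (k *: f) x = k * f x.
Proof. by rewrite /GRing.scale /= ffunE. Qed.

Lemma dim_ge (F : fieldType) (vT : vectType F) (I : finType) (U : {vspace vT})
    (phi : I -> vT -> F) :
  (forall a, linear (phi a : vT -> F^o)) ->
  (forall a, exists2 u, u \in U & forall b, phi b u = (b == a)%:R) ->
  (#|I| <= \dim U)%N.
Proof.
move=> Hl Hd.
pose f (u : vT) : {ffun I -> F^o} := [ffun b => phi b u].
have lin_f : linear f.
  by move=> k u v; apply/ffunP => b; rewrite !ffunE (Hl b).
pose flM := GRing.isLinear.Build _ _ _ _ f lin_f.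
pose fL : {linear _ -> _} := HB.pack f flM.
have H1 : (\dim (linfun fL @: U) <= \dim U)%N.
  by rewrite -(limg_ker_dim (linfun fL) U) leq_addl.
apply: leq_trans H1.
have -> : #|I| = \dim (fullv : {vspace {ffun I -> F^o}}).
  by rewrite dimvf /dim /= muln1.
apply: dimvS; apply/subvP => y _.
have -> : y = \sum_a y a *: [ffun b => ((b == a)%:R : F^o)].
  apply/ffunP => b; rewrite sum_ffunE (bigD1 b) //= big1 ?addr0.
    by rewrite ffunZE' ffunE eqxx mulr1.
  by move=> a nab; rewrite ffunZE' ffunE eq_sym (negbTE nab) mulr0.
apply: rpred_sum => a _; apply: rpredZ.
have [u Hu Hb] := Hd a.
have -> : [ffun b => ((b == a)%:R : F^o)] = linfun fL u.
  by rewrite lfunE; apply/ffunP => b; rewrite !ffunE Hb.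
exact: memv_img.
Qed.

Set Implicit Arguments. Unset Strict Implicit. Unset Printing Implicit Defensive.

Section Pair.
Variables (F : fieldType) (r : nat) (n d : 'I_r -> nat).

Definition pairing (c : SVidx n d -> F) (w : {ffun SVidx n d -> F^o}) : F :=
  \sum_a c a * w a.

Lemma pairing_lin c : linear (pairing c : _ -> F^o).
Proof.
move=> k u w; rewrite /pairing /GRing.scale /= mulr_sumr -big_split /=.
apply: eq_bigr => a _; rewrite !ffunE /GRing.scale /=; ring.
Qed.

Lemma pairingZ c a w : pairing c (a *: w) = a * pairing c w.
Proof.
rewrite /pairing mulr_sumr; apply: eq_bigr => b _.
by rewrite /GRing.scale /= ffunE /GRing.scale /=; ring.
Qed.

Lemma pairingB c u w : pairing c (u - w) = pairing c u - pairing c w.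
Proof.
rewrite /pairing -sumrB; apply: eq_bigr => b _.
by rewrite !ffunE mulrBr.
Qed.

Definition Vd (v : SVpt F n) (i0 : 'I_r) (j0 : nat) : PPt F n :=
  fun i j => (v i j)%:P + (if (i == i0) && (val j == j0) then 'X else 0).
Arguments Vd v i0 j0 i j : clear implicits.

Lemma Vd0 v i0 j0 i j : (Vd v i0 j0 i j).[0] = v i j.
Proof. by rewrite /Vd hornerD hornerC; case: ifP => _; rewrite ?hornerX ?horner0 addr0. Qed.

Lemma pair_sv c (f : PPt F n -> {poly F}) :
  (forall V, f V = \sum_a c a *: mono (expoE a) V) ->
  forall v i0 j0, pairing c (sv d v) = (f (Vd v i0 j0)).[0].
Proof.
move=> Hf v i0 j0; rewrite Hf horner_sum; apply: eq_bigr => a _.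
rewrite hornerZ ffunE /mono horner_prod; congr (_ * _); apply: eq_bigr => i _.
rewrite horner_prod; apply: eq_bigr => j _; by rewrite horner_exp Vd0.
Qed.

Lemma pair_dsv c (f : PPt F n -> {poly F}) :
  (forall V, f V = \sum_a c a *: mono (expoE a) V) ->
  forall v i0 j0, pairing c (dsv d v i0 j0) = ((f (Vd v i0 j0))^`()).[0].
Proof.
move=> Hf v i0 j0; rewrite Hf raddf_sum horner_sum; apply: eq_bigr => a _.
by rewrite ffunE /= derivZ hornerZ.
Qed.

End Pair.
Arguments Vd {F r n} v i0 j0 i j.

Set Implicit Arguments. Unset Strict Implicit. Unset Printing Implicit Defensive.

Section Tools.
Variables (F : fieldType) (r : nat) (n : 'I_r -> nat).

Definition ev (i : 'I_r) (w : 'I_(n i).+1 -> F) (v : SVpt F n) : F :=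
  \sum_k w k * v i k.
Arguments ev i w v : clear implicits.

Lemma lin0 (i : 'I_r) (w : 'I_(n i).+1 -> F) (v : SVpt F n) i0 j0 : (lin i w (Vd v i0 j0)).[0] = ev i w v.
Proof.
rewrite /lin horner_sum; apply: eq_bigr => k _; by rewrite hornerZ Vd0.
Qed.

Lemma lin1 (i : 'I_r) (w : 'I_(n i).+1 -> F) (v : SVpt F n) i0 j0 : ((lin i w (Vd v i0 j0))^`()).[0] =
  \sum_k (if (i == i0) && (val k == j0) then w k else 0).
Proof.
rewrite /lin raddf_sum horner_sum; apply: eq_bigr => k _ /=.
rewrite derivZ hornerZ /Vd derivD derivC add0r.
by case: ifP => _; rewrite ?derivX ?deriv0 ?hornerC ?horner0 ?mulr1 ?mulr0.
Qed.

Definition dz (P : {poly F}) := P.[0] = 0 /\ (P^`()).[0] = 0.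

Lemma der0M (P Q : {poly F}) :
  ((P * Q)^`()).[0] = (P^`()).[0] * Q.[0] + P.[0] * (Q^`()).[0].
Proof. by rewrite derivM hornerD !hornerM. Qed.

Lemma dz_sq L : L.[0] = 0 -> dz (L * L).
Proof. by move=> H; split; rewrite ?der0M ?hornerM H; ring. Qed.

Lemma dzMr P Q : dz P -> dz (P * Q).
Proof. by move=> [H1 H2]; split; rewrite ?der0M ?hornerM ?H1 ?H2; ring. Qed.

Lemma dzMl P Q : dz P -> dz (Q * P).
Proof. by move=> H; rewrite mulrC; apply: dzMr. Qed.

Lemma sum_delta m (j : 'I_m) (y : 'I_m -> F) :
  \sum_jj (jj == j)%:R * y jj = y j.
Proof.
rewrite (bigD1 j) //= eqxx mul1r big1 ?addr0 // => jj /negbTE ->; by rewrite mul0r.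
Qed.

Lemma Rep_prodseq (J : Type) (s : seq J) (P : pred J) (E : J -> 'I_r -> nat)
    (f : J -> PPt F n -> {poly F}) :
  (forall l, Rep (E l) (f l)) ->
  Rep (fun i => \sum_(l <- s | P l) E l i)%N (fun V => \prod_(l <- s | P l) f l V).
Proof.
move=> H; elim: s => [|a s IH].
  by apply: (Rep_ext _ _ Rep_one) => [i|V]; rewrite big_nil.
case Pa: (P a).
  apply: (Rep_ext _ _ (Rep_mul (H a) IH)) => [i|V]; by rewrite big_cons Pa.
by apply: (Rep_ext _ _ IH) => [i|V]; rewrite big_cons Pa.
Qed.

Lemma Rep_pow e (f : PPt F n -> {poly F}) m : Rep e f ->
  Rep (fun i => m * e i)%N (fun V => f V ^+ m).
Proof.
move=> H; elim: m => [|m IH].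
  by apply: (Rep_ext _ _ Rep_one) => [i|V]; rewrite ?mul0n ?expr0.
by apply: (Rep_ext _ _ (Rep_mul H IH)) => [i|V]; rewrite ?mulSn ?exprS.
Qed.

End Tools.
Arguments ev {F r n} i w v.

Unset Implicit Arguments. Unset Printing Implicit Defensive.

Section Main.
Variables (F : fieldType) (r : nat) (n d : 'I_r -> nat) (h : nat).
Variable x : 'I_h -> SVpt F n.
Variable rho : 'I_h -> forall i, 'I_(n i).+1.
Hypothesis Hrho : forall k i, x k i (rho k i) != 0.
Variable sig : 'I_h -> 'I_h -> 'I_r.
Variable tau : forall k l, 'I_(n (sig k l)).+1 -> F.
Hypothesis Htau0 : forall k l, k != l -> ev (sig k l) (tau k l) (x l) = 0.
Hypothesis Htau1 : forall k l, k != l -> ev (sig k l) (tau k l) (x k) != 0.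
Hypothesis Hd : forall i, (2 * h <= (d i).+1)%N.

Definition L k l (V : PPt F n) := lin (sig k l) (tau k l) V.
Definition G k V := \prod_(l | l != k) (L k l V * L k l V).
Definition gdeg k i := (\sum_(l | l != k) ((sig k l == i) + (sig k l == i)))%N.
Definition e k i := (d i - gdeg k i)%N.
Definition mu k i : 'I_(n i).+1 -> F := fun j => (j == rho k i)%:R.
Definition M k (s : 'I_r -> nat) V := \prod_i (lin i (mu k i) V) ^+ s i.
Definition nu k i (j : 'I_(n i).+1) : 'I_(n i).+1 -> F :=
  fun jj => (jj == j)%:R - (jj == rho k i)%:R * (x k i j / x k i (rho k i)).
Definition f0 k V := G k V * M k (e k) V.
Definition f1 k i (j : 'I_(n i)) V :=
  lin i (nu k i (lift (rho k i) j)) V * (G k V * M k (fun i' => e k i' - (i' == i))%N V).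

Lemma gdeg_lt k i : (gdeg k i < d i)%N.
Proof.
have H1 : (gdeg k i <= \sum_(l | l != k) 2)%N.
  by apply: leq_sum => l _; case: (sig k l == i).
have H2 : (\sum_(l | l != k) 2 + 2 = 2 * h)%N.
  have -> : (2 * h = \sum_(l < h) 2)%N by rewrite big_const_ord iter_addn_0 mulnC.
  by rewrite [X in (_ = X)%N](bigD1 k) //= addnC.
have := Hd i; lia.
Qed.

Lemma Rep_G k : Rep (gdeg k) (G k).
Proof.
apply: (Rep_ext _ _ (Rep_prodseq (index_enum 'I_h) (fun l => l != k) (fun l => Rep_mul (Rep_lin (tau k l)) (Rep_lin (tau k l))))).
  by move=> i; rewrite /gdeg; apply: eq_bigr => l _; rewrite eq_sym.
by [].
Qed.

Lemma Rep_M k s : Rep s (M k s).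
Proof.
apply: (Rep_ext _ _ (Rep_prodseq (index_enum 'I_r) xpredT (fun i => Rep_pow (s i) (Rep_lin (mu k i))))).
  move=> i; rewrite (bigD1 i) //= eqxx muln1 big1 ?addn0 // => i' ni.
  by rewrite eq_sym (negbTE ni) muln0.
by [].
Qed.

Lemma Rep_f0 k : Rep d (f0 k).
Proof.
apply: (Rep_ext _ _ (Rep_mul (Rep_G k) (Rep_M k (e k)))) => // i.
by have := gdeg_lt k i; rewrite /e; lia.
Qed.

Lemma Rep_f1 k i j : Rep d (f1 k i j).
Proof.
apply: (Rep_ext _ _ (Rep_mul (Rep_lin _) (Rep_mul (Rep_G k) (Rep_M k _)))) => // i'.
by have := gdeg_lt k i'; rewrite /e; case: (i' == i); lia.
Qed.


Lemma dz_G k k' i1 j1 : k' != k -> dz (G k' (Vd (x k) i1 j1)).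
Proof.
move=> nk; rewrite /G (bigD1 k) 1?eq_sym //=; apply: dzMr; apply: dz_sq.
by rewrite /L lin0 Htau0.
Qed.

Lemma dz_f0 k k' i1 j1 : k' != k -> dz (f0 k' (Vd (x k) i1 j1)).
Proof. by move=> nk; apply: dzMr; apply: dz_G. Qed.

Lemma dz_f1 k k' i j i1 j1 : k' != k -> dz (f1 k' i j (Vd (x k) i1 j1)).
Proof. by move=> nk; apply: dzMl; apply: dzMr; apply: dz_G. Qed.

Lemma G0 k i1 j1 : (G k (Vd (x k) i1 j1)).[0] != 0.
Proof.
rewrite /G horner_prod; apply/prodf_neq0 => l nl.
by rewrite hornerM /L lin0 mulf_neq0 // Htau1 // eq_sym.
Qed.

Lemma ev_mu k i : ev i (mu k i) (x k) = x k i (rho k i).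
Proof. by rewrite /ev /mu sum_delta. Qed.

Lemma M0 k s i1 j1 : (M k s (Vd (x k) i1 j1)).[0] != 0.
Proof.
rewrite /M horner_prod; apply/prodf_neq0 => i _.
by rewrite horner_exp lin0 ev_mu expf_neq0.
Qed.

Lemma f00 k i1 j1 : (f0 k (Vd (x k) i1 j1)).[0] != 0.
Proof. by rewrite /f0 hornerM mulf_neq0 ?G0 ?M0. Qed.

Lemma ev_nu k i j : ev i (nu k i j) (x k) = 0.
Proof.
rewrite /ev /nu.
rewrite (eq_bigr (fun jj => (jj == j)%:R * x k i jj -
    (x k i j / x k i (rho k i)) * ((jj == rho k i)%:R * x k i jj))); last first.
  by move=> jj _; ring.
by rewrite sumrB -mulr_sumr !sum_delta divfK ?subrr.
Qed.

Lemma f10 k i j i1 j1 : (f1 k i j (Vd (x k) i1 j1)).[0] = 0.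
Proof. by rewrite /f1 hornerM lin0 ev_nu mul0r. Qed.

Lemma f1d k i' (j' : 'I_(n i')) i (j : 'I_(n i)) :
  let V := Vd (x k) i (val (lift (rho k i) j)) in
  ((f1 k i' j' V)^`()).[0] =
  ((Tagged (fun i => 'I_(n i)) j' == Tagged (fun i => 'I_(n i)) j)%:R) *
    (G k V * M k (fun i0 => e k i0 - (i0 == i'))%N V).[0].
Proof.
move=> V; rewrite /f1 der0M lin0 ev_nu mul0r addr0; congr (_ * _).
rewrite lin1; case: (eqVneq i' i) => [E|ne].
  subst i'.
  rewrite (bigD1 (lift (rho k i) j)) //= eqxx big1 ?addr0; last first.
    by move=> kk nk; case: eqP => // E; move: nk; rewrite (_ : kk = lift (rho k i) j) ?eqxx //; exact: val_inj.
  rewrite /nu eq_Tagged /= (inj_eq (@lift_inj _ _)) [_ == rho k i]eq_sym.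
  by rewrite (negbTE (neq_lift _ _)) mul0r subr0 eq_sym.
rewrite big1 //.
case: eqP => // /eqP /eq_tag /= E; by rewrite E eqxx in ne.
Qed.

End Main.

Unset Implicit Arguments. Unset Printing Implicit Defensive.

Section Final.
Variables (F : fieldType) (r : nat) (n d : 'I_r -> nat) (h : nat).
Variable x : 'I_h -> SVpt F n.
Variable rho : 'I_h -> forall i, 'I_(n i).+1.
Hypothesis Hrho : forall k i, x k i (rho k i) != 0.
Variable sig : 'I_h -> 'I_h -> 'I_r.
Variable tau : forall k l, 'I_(n (sig k l)).+1 -> F.
Hypothesis Htau0 : forall k l, k != l -> ev (sig k l) (tau k l) (x l) = 0.
Hypothesis Htau1 : forall k l, k != l -> ev (sig k l) (tau k l) (x k) != 0.
Hypothesis Hd : forall i, (2 * h <= (d i).+1)%N.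
Variable i00 : 'I_r.

Lemma main_gen (U : {vspace {ffun SVidx n d -> F^o}}) :
  (forall k, sv d (x k) \in U) -> (forall k i (j : 'I_(n i).+1), dsv d (x k) i (val j) \in U) ->
  (h * (\sum_i n i).+1 <= \dim U)%N.
Proof.
move=> Usv Udsv.
pose I := ('I_h * option {i : 'I_r & 'I_(n i)})%type.
pose fI (a : I) := match a.2 with
  | None => f0 F r n d h rho sig tau a.1
  | Some p => f1 F r n d h x rho sig tau a.1 (tag p) (tagged p) end.
have Rep_fI a : Rep d (fI a).
  case: a => k [p|] /=; [exact: (Rep_f1 F r n d h x rho sig tau Hd) | exact: (Rep_f0 F r n d h rho sig tau Hd)].
have /fin_all_exists [c Hc] : forall a : I, exists c : SVidx n d -> F,
    forall V, fI a V = \sum_b c b *: mono (expoE b) V.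
  by move=> a; apply: Rep_coef.
pose phi a := pairing (c a).
have Hsv a k : phi a (sv d (x k)) = (fI a (Vd (x k) i00 0)).[0].
  exact: pair_sv (Hc a) (x k) i00 0%N.
have Hdsv a k i j : phi a (dsv d (x k) i j) = ((fI a (Vd (x k) i j))^`()).[0].
  exact: pair_dsv (Hc a) (x k) i j.
have -> : (h * (\sum_i n i).+1 = #|{: 'I_h * option {i : 'I_r & 'I_(n i)}}|)%N.
  rewrite card_prod card_ord card_option card_tagged; congr (_ * _.+1)%N.
  rewrite sumnE big_map big_enum /=; apply: eq_bigr => i _; by rewrite card_ord.
apply: (dim_ge (phi := phi)).
  by move=> a; apply: pairing_lin.
have Ha k : (f0 F r n d h rho sig tau k (Vd (x k) i00 0)).[0] != 0.
  exact: (f00 F r n d h x rho Hrho sig tau Htau1).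
have Hsv' k b : phi b (sv d (x k)) =
    ((b == (k, None))%:R) * (f0 F r n d h rho sig tau k (Vd (x k) i00 0)).[0].
  rewrite Hsv; case: b => k' o'; case: (eqVneq k' k) => [->|nk].
    case: o' => [p|] /=.
      by rewrite (f10 F r n d h x rho Hrho sig tau) xpair_eqE eqxx /= mul0r.
    by rewrite xpair_eqE !eqxx mul1r.
  rewrite xpair_eqE (negbTE nk) /= mul0r.
  case: o' => [p|] /=.
    exact: (dz_f1 F r n d h x rho sig tau Htau0 k k' _ _ i00 0 nk).1.
  exact: (dz_f0 F r n d h x rho sig tau Htau0 k k' i00 0 nk).1.
pose u0 k := (f0 F r n d h rho sig tau k (Vd (x k) i00 0)).[0]^-1 *: sv d (x k).
have Hu0 k b : phi b (u0 k) = (b == (k, None))%:R.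
  by rewrite /phi /u0 pairingZ -/(phi b _) Hsv' mulrCA mulVf ?mulr1.
have Uu0 k : u0 k \in U by apply: memvZ.
move=> [k [[i j]|]]; last by exists (u0 k).
pose w := dsv d (x k) i (val (lift (rho k i) j)).
pose gam := phi (k, None) w.
pose bet := phi (k, Some (Tagged (fun i => 'I_(n i)) j)) w.
have Hbet : bet != 0.
  rewrite /bet Hdsv /= (f1d F r n d h x rho Hrho sig tau) eqxx mul1r hornerM.
  rewrite mulf_neq0 //.
    exact: (G0 F r n h x sig tau Htau1).
  exact: (M0 F r n h x rho Hrho).
exists (bet^-1 *: (w - gam *: u0 k)).
  by apply: memvZ; apply: memvB; [apply: Udsv | apply: memvZ].
move=> b; rewrite /phi pairingZ pairingB pairingZ -!/(phi b _) Hu0.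
case: b => k' o'; case: (eqVneq k' k) => [->|nk].
  case: o' => [p'|].
    rewrite xpair_eqE eqxx /= mulr0 subr0.
    case: (eqVneq p' (Tagged (fun i => 'I_(n i)) j)) => [->|np].
      by rewrite eqxx mulVf.
    rewrite xpair_eqE eqxx /= (_ : (Some p' == _) = false); last first.
      by apply/eqP => -[E]; rewrite E eqxx in np.
    rewrite Hdsv /=; case: p' np => i' j' np.
    by rewrite (f1d F r n d h x rho Hrho sig tau) /= (negbTE np) mul0r mulr0.
  by rewrite xpair_eqE !eqxx /= mulr1 /gam subrr mulr0 xpair_eqE eqxx.
rewrite !xpair_eqE (negbTE nk) /= mulr0 subr0 Hdsv.
case: o' => [p|] /=.
  by rewrite (dz_f1 F r n d h x rho sig tau Htau0 k k' _ _ _ _ nk).2 mulr0.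
by rewrite (dz_f0 F r n d h x rho sig tau Htau0 k k' _ _ nk).2 mulr0.
Qed.
End Final.

Unset Implicit Arguments. Unset Printing Implicit Defensive.

Lemma sep_form (F : fieldType) (r : nat) (n d : 'I_r -> nat) (v w : SVpt F n)
    (pw : forall i, 'I_(n i).+1) :
  (forall i, w i (pw i) != 0) -> ~ same_proj_pt d v w ->
  exists i (f : 'I_(n i).+1 -> F), ev i f w = 0 /\ ev i f v != 0.
Proof.
move=> Hw Hns.
pose c i := v i (pw i) / w i (pw i).
have [/forallP Hall | Hneg] :=
  boolP [forall i, [forall j, v i j == c i * w i j]]; last first.
  move: Hneg; rewrite negb_forall; case/existsP => i.
  rewrite negb_forall; case/existsP => j Hj'.
  pose f jj := (jj == j)%:R - (jj == pw i)%:R * (w i j / w i (pw i)).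
  have Hev (y : SVpt F n) : ev i f y = y i j - (w i j / w i (pw i)) * y i (pw i).
    rewrite /ev /f (eq_bigr (fun jj => (jj == j)%:R * y i jj -
      (w i j / w i (pw i)) * ((jj == pw i)%:R * y i jj))); last by move=> jj _; ring.
    by rewrite sumrB -mulr_sumr !sum_delta.
  exists i, f; rewrite !Hev divfK ?subrr //; split => //.
  rewrite subr_eq0; apply: contra Hj' => /eqP ->; apply/eqP.
  by rewrite /c; field; exact: Hw.
exfalso; apply: Hns; exists (\prod_i c i ^+ d i).
apply/ffunP => a; rewrite ffunZE' !ffunE -big_split /=; apply: eq_bigr => i _.
have -> : \prod_(j < (n i).+1) v i j ^+ expo a j =
    \prod_(j < (n i).+1) (c i ^+ expo a j * w i j ^+ expo a j).
  by apply: eq_bigr => j _; move/forallP: (Hall i) => /(_ j) /eqP ->; rewrite exprMn.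
rewrite big_split /= prodrXr; congr (_ ^+ _ * _).
by apply/eqP; exact: (valP (a i)).
Qed.

Lemma final_gen (F : fieldType) (r : nat) (n d : 'I_r -> nat) (h : nat) :
  (0 < r)%N ->
  (forall i, h <= uphalf (d i))%N ->
  forall x : 'I_h -> SVpt F n,
    (forall k, nonzero_pt (x k)) ->
    (forall k l, k != l -> ~ same_proj_pt d (x k) (x l)) ->
    (minn (h * (\sum_(i < r) n i) + h - 1)
          ((\prod_(i < r) 'C(n i + d i, n i)) - 1)
       <= (\dim (\sum_(k < h) tangent_cone d (x k))%VS).-1)%N.
Proof.
move=> r0 Hh x Hnz Hdist.
have Hd i : (2 * h <= (d i).+1)%N.
  have := Hh i; have := odd_double_half (d i); rewrite uphalf_half.
  case: (odd (d i)) => /=; lia.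
have /fin_all_exists [rho Hrho] : forall k, exists u : forall i, 'I_(n i).+1,
    forall i, x k i (u i) != 0.
  move=> k; apply: (@fin_all_exists _ (fun i => 'I_(n i).+1) (fun i u => x k i u != 0)) => i.
  by have [j Hj] := Hnz k i; exists j.
have /fin_all_exists [ST HST] : forall k, exists s : 'I_h -> {i : 'I_r & 'I_(n i).+1 -> F},
    forall l, k != l -> ev (tag (s l)) (tagged (s l)) (x l) = 0 /\
                        ev (tag (s l)) (tagged (s l)) (x k) != 0.
  move=> k; apply: (@fin_all_exists _ (fun _ => {i : 'I_r & 'I_(n i).+1 -> F})
    (fun l s => k != l -> ev (tag s) (tagged s) (x l) = 0 /\ ev (tag s) (tagged s) (x k) != 0)) => l.
  case: (eqVneq k l) => [->|nkl].
    by exists (Tagged (fun i => 'I_(n i).+1 -> F) (fun _ : 'I_(n (Ordinal r0)).+1 => 0)).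
  have [i [f [H1 H2]]] := sep_form _ _ _ d (x k) (x l) (rho l) (Hrho l) (Hdist k l nkl).
  by exists (Tagged (fun i => 'I_(n i).+1 -> F) f).
pose sig k l := tag (ST k l).
pose tau k l : 'I_(n (sig k l)).+1 -> F := tagged (ST k l).
have H := main_gen F r n d h x rho Hrho sig tau
  (fun k l nkl => (HST k l nkl).1) (fun k l nkl => (HST k l nkl).2) Hd (Ordinal r0)
  (\sum_(k < h) tangent_cone d (x k))%VS.
have Hsub k : (tangent_cone d (x k) <= \sum_(k < h) tangent_cone d (x k))%VS.
  exact: (sumv_sup k).
have {}H := H (fun k => subvP (Hsub k) _ (memv_span (mem_head _ _))).
have {}H : (h * (\sum_i n i).+1 <= \dim (\sum_(k < h) tangent_cone d (x k)))%N.
  apply: H => k i j; apply: (subvP (Hsub k)); apply: memv_span.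
  rewrite in_cons; apply/orP; right; apply/allpairsPdep.
  by exists i, j; rewrite !mem_enum.
apply: leq_trans (geq_minl _ _) _.
move: H; rewrite mulnS -subn1 => H; apply: leq_sub2r; rewrite addnC; exact: H.
Qed.


Theorem corollary4p3 (R : realType) (r : nat) (n d : 'I_r -> nat) (h : nat) :
  (0 < r)%N ->
  (forall i, 0 < n i)%N ->
  (forall i, 0 < d i)%N ->
  (forall i j : 'I_r, (i <= j)%N -> (n i <= n j)%N) ->
  (0 < h)%N ->
  (forall i, h <= uphalf (d i))%N ->
  forall x : 'I_h -> SVpt R[i] n,
    (forall k, nonzero_pt (x k)) ->
    (forall k l, k != l -> ~ same_proj_pt d (x k) (x l)) ->
    (minn (h * (\sum_(i < r) n i) + h - 1)
          ((\prod_(i < r) 'C(n i + d i, n i)) - 1)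
       <= (\dim (\sum_(k < h) tangent_cone d (x k))%VS).-1)%N.
Proof.
move=> r0 _ _ _ _ Hh x Hnz Hdist.
exact: (final_gen _ _ _ _ _ r0 Hh x Hnz Hdist).
Qed.
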